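(* Let $d\ge2$ be an integer, $p^*=1-1/d$, and for integers $0\le w\le d-1$ and $p\in(0,1)$ let $$T_1(d,w,p)=\frac{d-w}{\ln\left(\frac{1}{1+p^d-p^w}\right)}.$$ Then for every integer $w$ with $0\le w\le d-1$, $T_1(d,w,p^* )\le T_1(d,d-1,p^* )$. *)

(* Defs.v *)
From Stdlib Require Import Reals.
Open Scope R_scope.

Definition T1 (d w : nat) (p : R) : R :=
  (INR d - INR w) / ln (1 / (1 + p ^ d - p ^ w)).

Definition pstar (d : nat) : R := 1 - 1 / INR d.

(* Main.v *)
Require Import Defs.
From Stdlib Require Import Reals.
From Stdlib Require Import Lra Lia Psatz.
Open Scope R_scope.

Lemma lemA (p : R) (m : nat) : 0 <= p <= 1 ->
  INR (S m) * p ^ m * (1 - p) <= 1 - p ^ (S m).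
Proof.
  intros [H0 H1]. induction m as [|m IH].
  - simpl. lra.
  - rewrite S_INR.
    assert (Hpm : 0 <= p ^ m) by (apply pow_le; lra).
    assert (Hpm1 : p ^ S m <= p ^ m) by (simpl; nra).
    assert (Hk : 0 <= INR (S m)) by apply pos_INR.
    replace (p ^ S (S m)) with (p * p ^ S m) by reflexivity.
    replace (p ^ S m) with (p * p ^ m) in * by reflexivity.
    assert (INR (S m) * p ^ m * (1 - p) * (1 - p) >= 0).
    { apply Rle_ge. repeat apply Rmult_le_pos; lra. }
    rewrite S_INR in *. nra.
Qed.

Lemma powle1 (p : R) (n : nat) : 0 <= p <= 1 -> p ^ n <= 1.
Proof.
  intros H. induction n as [|n IH]; simpl; [lra|].
  assert (0 <= p ^ n) by (apply pow_le; lra). nra.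
Qed.

Lemma bern (c : R) (k : nat) : 0 <= c <= 1 -> 1 - INR k * c <= (1 - c) ^ k.
Proof.
  intros [H0 H1]. induction k as [|k IH].
  - simpl. lra.
  - rewrite S_INR. simpl.
    assert (0 <= INR k) by apply pos_INR.
    nra.
Qed.

Theorem lemma8 (d w : nat) (hd : (2 <= d)%nat) (hw : (w <= d - 1)%nat) :
  T1 d w (pstar d) <= T1 d (d - 1) (pstar d).
Proof.
  unfold T1.
  set (p := pstar d).
  assert (HD : 2 <= INR d) by (apply (le_INR 2); lia).
  assert (Hp0 : 0 < p) by (unfold p, pstar; apply Rlt_Rminus;
    apply (Rmult_lt_reg_r (INR d)); [lra|]; field_simplify; lra).
  assert (Hp1 : p < 1) by (unfold p, pstar;
    assert (0 < 1 / INR d) by (apply Rdiv_lt_0_compat; lra); lra).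
  destruct (d - w)%nat as [|m] eqn:Hk; [lia|].
  assert (Hd : d = (w + S m)%nat) by lia.
  assert (Hd1 : (d - 1 = w + m)%nat) by lia.
  rewrite Hd1.
  replace (INR d - INR (w + m)) with 1 by (rewrite Hd, !plus_INR, S_INR; ring).
  replace (INR d - INR w) with (INR (S m)) by (rewrite Hd, plus_INR; ring).
  rewrite Hd, !pow_add.
  assert (Hpw : 0 < p ^ w <= 1) by (split; [apply pow_lt; lra | apply powle1; lra]).
  assert (Hpm : 0 < p ^ m <= 1) by (split; [apply pow_lt; lra | apply powle1; lra]).
  assert (HpSm : p ^ S m = p * p ^ m) by reflexivity.
  set (c := p ^ w * p ^ m * (1 - p)).
  set (y := p ^ w * (1 - p ^ S m)).
  assert (Hc : 0 < c < 1).
  { unfold c. assert (0 < p ^ w * p ^ m) by (apply Rmult_lt_0_compat; lra).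
    assert (p ^ w * p ^ m <= 1) by nra. split; nra. }
  assert (Ey : 1 + p ^ w * p ^ S m - p ^ w = 1 - y) by (unfold y; ring).
  assert (Ec : 1 + p ^ w * p ^ S m - p ^ w * p ^ m = 1 - c) by (unfold c; rewrite HpSm; ring).
  rewrite Ey, Ec.
  assert (Hy : 0 < y < 1).
  { unfold y. rewrite HpSm. assert (0 < p * p ^ m) by (apply Rmult_lt_0_compat; lra).
    assert (p * p ^ m < 1) by nra. split; nra. }
  assert (HA := lemA p m ltac:(lra)).
  assert (HB := bern c (S m) ltac:(lra)).
  assert (Hk0 : 0 < INR (S m)) by apply lt_0_INR, Nat.lt_0_succ.
  assert (Hky : INR (S m) * c <= y).
  { unfold c, y. replace (INR (S m) * (p ^ w * p ^ m * (1 - p))) with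
      (p ^ w * (INR (S m) * p ^ m * (1 - p))) by ring.
    apply Rmult_le_compat_l; lra. }
  assert (Hpos : 0 < 1 - c) by lra.
  unfold Rdiv at 2 4; rewrite !Rmult_1_l, !ln_Rinv by lra.
  assert (HL : ln (1 - c) < 0) by (rewrite <- ln_1; apply ln_increasing; lra).
  assert (HM : ln (1 - y) < 0) by (rewrite <- ln_1; apply ln_increasing; lra).
  assert (Hkey : ln (1 - y) <= INR (S m) * ln (1 - c)).
  { rewrite <- ln_pow by lra. assert (Hle : 1 - y <= (1 - c) ^ S m) by lra.
    destruct (Rle_lt_or_eq_dec _ _ Hle) as [Hl|He].
    - left. apply ln_increasing; lra.
    - right. rewrite He. reflexivity. }
  apply (Rmult_le_reg_r ((0 - ln (1 - y)) * (0 - ln (1 - c)))); [nra|].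
  field_simplify; try lra.
Qed.
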